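(* Let $\Lambda$ be an artin algebra and let $f\colon X\to Y$ be an irreducible morphism in the category ${\rm proj}\,\Lambda$. Then ${\rm Coker}\,f\notin {\rm proj}\,\Lambda$.
   Context: ${\rm mod}\,\Lambda$ denotes the category of finitely generated right $\Lambda$-modules and ${\rm proj}\,\Lambda$ its full subcategory of projective modules. A morphism $f$ in an additive category $\mathcal{C}$ is irreducible if it is neither a split monomorphism (section) nor a split epimorphism (retraction), and whenever $f=gh$ in $\mathcal{C}$, either $h$ is a section or $g$ is a retraction. The cokernel is computed in ${\rm mod}\,\Lambda$. *)

(* Defs.v *)
From HB Require Import structures.
From mathcomp Require Import all_boot all_algebra.
Set Implicit Arguments. Unset Strict Implicit. Unset Printing Implicit Defensive.
Import GRing.Theory.
Local Open Scope ring_scope.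

Definition is_ideal (R : comPzRingType) (I : R -> Prop) : Prop :=
  [/\ I 0, (forall x y, I x -> I y -> I (x - y)) & (forall a x, I x -> I (a * x))].

Definition artinian (R : comPzRingType) : Prop :=
  forall I : nat -> R -> Prop,
    (forall n, is_ideal (I n)) ->
    (forall n x, I n.+1 x -> I n x) ->
    exists N, forall n, (N <= n)%N -> forall x, I n x <-> I N x.

Definition fingen (S : pzRingType) (V : lmodType S) : Prop :=
  exists n (v : 'I_n -> V), forall x : V, exists a : 'I_n -> S,
    x = \sum_(i < n) a i *: v i.

Definition artin_algebra (R : comPzRingType) (L : algType R) : Prop :=
  artinian R /\ fingen L.

(* Right L-modules are left modules over the converse ring L^c. *)

Definition projective (S : pzRingType) (P : lmodType S) : Prop :=
  forall (M N : lmodType S) (p : {linear M -> N}) (g : {linear P -> N}),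
    (forall y : N, exists x : M, p x = y) ->
    exists h : {linear P -> M}, forall x, p (h x) = g x.

Definition in_proj (S : pzRingType) (P : lmodType S) : Prop :=
  fingen P /\ projective P.

Definition is_section (S : pzRingType) (A B : lmodType S) (h : {linear A -> B}) :=
  exists r : {linear B -> A}, forall x, r (h x) = x.
Definition is_retraction (S : pzRingType) (A B : lmodType S) (g : {linear A -> B}) :=
  exists s : {linear B -> A}, forall y, g (s y) = y.

Definition irreducible_in_proj (S : pzRingType) (X Y : lmodType S)
    (f : {linear X -> Y}) : Prop :=
  [/\ ~ is_section f, ~ is_retraction f &
      forall (Z : lmodType S) (h : {linear X -> Z}) (g : {linear Z -> Y}),
        in_proj Z -> (forall x, f x = g (h x)) ->
        is_section h \/ is_retraction g].

Definition is_cokernel (S : pzRingType) (X Y C : lmodType S)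
    (f : {linear X -> Y}) (pi : {linear Y -> C}) : Prop :=
  (forall c : C, exists y, pi y = c) /\
  (forall y : Y, pi y = 0 <-> exists x, y = f x).

(* Main.v *)
Require Import Defs.
From HB Require Import structures.
From mathcomp Require Import all_boot all_algebra.
Import GRing.Theory.
Local Open Scope ring_scope.

Section Helper.
Variables (S : pzRingType) (Y C : lmodType S) (pi : {linear Y -> C}) (s : {linear C -> Y}).
Definition eproj (y : Y) : Y := y - s (pi y).
Lemma eproj_lin : linear eproj.
Proof. move=> a x y; rewrite /eproj (linearP pi) (linearP s) scalerBr opprD addrACA; apply: (f_equal2 (fun u v => u + v)); [congr (_ - _); rewrite -scalerN|]; reflexivity. Qed.
HB.instance Definition _ := GRing.isLinear.Build S Y Y *:%R eproj eproj_lin.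
End Helper.

Theorem lemma2p1 (R : comPzRingType) (L : algType R) (HL : artin_algebra L)
    (X Y : lmodType L^c) (HX : in_proj X) (HY : in_proj Y)
    (f : {linear X -> Y}) (Hf : irreducible_in_proj f)
    (C : lmodType L^c) (pi : {linear Y -> C}) (Hpi : is_cokernel f pi) :
  ~ in_proj C.
Proof.
move=> [_ PC]; case: Hf => nsec nret irr.
case: Hpi => pisurj piker.
have [s Hs] := PC Y C pi (@idfun C : {linear C -> C}) pisurj.
have pif : forall x, pi (f x) = 0 by move=> x; apply/piker; exists x.
have [] := irr Y f (@eproj _ _ _ pi s : {linear Y -> Y}) HY.
  by move=> x; rewrite /= /eproj pif linear0 subr0.
  by [].
move=> [t Ht].
have pi0 : forall y, pi y = 0.
  move=> y; rewrite -(Ht y) /= /eproj linearB /= Hs /=; exact: subrr.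
have fsurj : forall y, exists x, f x = y.
  by move=> y; have [x ->] := (piker y).1 (pi0 y); exists x.
have [h Hh] := HY.2 X Y f (@idfun Y : {linear Y -> Y}) fsurj.
by apply: nret; exists h.
Qed.
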